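(* Let $p$ be a prime, $m\geq 1$ an integer, $E=\bigcup_{i=0}^{m-1}p^i\mathbb{Z}_p^\times$ identified with $\mathbb{Q}_p^\ast/p^{m\mathbb{Z}}$, and let $D$ be the operator on functions on $E$ given by $$D\phi(x)=-c_p\int_E H(z,x)\big(\phi(z)-\phi(x)\big)\,d^\ast z,\qquad c_p=\frac{p(1-p^{-1})^2}{1-p^{-2}},$$ $$H(z,x)=\frac{|x|\,|z|}{|x-z|^2}+\frac{1}{p^m-1}\Big(\frac{|x|}{|z|}+\frac{|z|}{|x|}\Big).$$ Every continuous multiplicative character $\pi$ of $\mathbb{Q}_p^\ast/p^{m\mathbb{Z}}$ is an eigenfunction of $D$. Writing $\pi(p^k u)=\zeta(k)\hat\pi(u)$ for $k\in\mathbb{Z}/m\mathbb{Z}$, $u\in\mathbb{Z}_p^\times$, with $\zeta$ a character of $\mathbb{Z}/m\mathbb{Z}$ and $\hat\pi$ a continuous character of $\mathbb{Z}_p^\times$, the eigenvalue is: (i) if $\hat\pi$ is nontrivial with conductor $n\geq 1$: $\lambda=(p-1)p^{n-1}$ (independent of $\zeta$ and of $m$); (ii) if $\hat\pi$ is trivial and $\zeta(1)=\omega$ (an $m$-th root of unity): $\lambda=\dfrac{p(p-1)(2-\omega-\overline{\omega})}{p^2-p(\omega+\overline{\omega})+1}$.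
   Context: $|x|=p^{-v(x)}$ with $v$ the $p$-adic valuation; $dx$ is the additive Haar measure with $\mathbb{Z}_p$ of measure $1$ and $d^\ast x=dx/|x|$. Products of elements of $E$ are taken modulo $p^{m\mathbb{Z}}$ with representative in $E$. The conductor of a nontrivial character $\hat\pi$ of $\mathbb{Z}_p^\times$ is the smallest integer $n\geq 1$ such that $\hat\pi$ is trivial on $1+p^n\mathbb{Z}_p$. *)

(* Defs.v *)
From HB Require Import structures.
From mathcomp Require Import all_boot all_order all_algebra.
From mathcomp Require Import all_classical all_reals all_analysis.
From mathcomp Require Import complex.
Set Implicit Arguments. Unset Strict Implicit. Unset Printing Implicit Defensive.
Import Order.TTheory GRing.Theory Num.Theory.
Import numFieldNormedType.Exports.
Local Open Scope classical_set_scope.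
Local Open Scope ring_scope.

(* p-adic integers Z_p as compatible systems of residues:                    *)
(*   zres x k = (x mod p^k), represented in [0, p^k).                        *)
Record zp (p : nat) := Zp {
  zres : nat -> nat ;
  zres_mod : forall k, (zres k %% p ^ k = zres k)%N ;
  zres_compat : forall k, (zres k.+1 %% p ^ k = zres k)%N }.

Lemma dvdn_exp_succ (p k : nat) : (p ^ k %| p ^ k.+1)%N.
Proof. by rewrite expnS dvdn_mull. Qed.

Definition zp_of_nat (p r : nat) : zp p.
Proof.
refine (@Zp p (fun k => r %% p ^ k)%N _ _) => k.
- by rewrite modn_mod.
- by rewrite modn_dvdm // dvdn_exp_succ.
Defined.

Definition zmul (p : nat) (x y : zp p) : zp p.
Proof.
refine (@Zp p (fun k => (zres x k * zres y k) %% p ^ k)%N _ _) => k.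
- by rewrite modn_mod.
- rewrite modn_dvdm ?dvdn_exp_succ //.
  by rewrite -modnMm -(zres_compat x k) -(zres_compat y k) modnMm.
Defined.

Definition zcong (p k : nat) (x y : zp p) : bool := (zres x k == zres y k).

Definition zunit (p : nat) (x : zp p) : bool := (zres x 1 != 0)%N.

(* p-adic valuation of x - y (for x <> y): the largest k with x = y mod p^k *)
Definition zval_diff (p : nat) (x y : zp p) : nat :=
  match pselect (exists k, ~~ zcong k x y) with
  | left H => (ex_minn (P := fun k => ~~ zcong k x y)
                 (let: ex_intro k Hk := H in ex_intro _ k Hk)).-1
  | right _ => 0%N
  end.

Section Padic.
Variable R : realType.
Local Notation C := R[i].

Definition zdist (p : nat) (x y : zp p) : C :=
  if pselect (exists k, ~~ zcong k x y) then (p%:R ^- zval_diff x y) else 0.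

(* An element x = p^i u of E is represented by the pair (i, u) with i < m    *)
(* and u a unit of Z_p.                                                      *)
Definition Ept (p : nat) := (nat * zp p)%type.

Definition in_E (p m : nat) (x : Ept p) : bool := (x.1 < m)%N && zunit x.2.

Definition Emul (p m : nat) (x y : Ept p) : Ept p :=
  ((x.1 + y.1) %% m, zmul x.2 y.2)%N.

Definition Eemb (p : nat) (x : Ept p) : zp p := zmul (zp_of_nat p (p ^ x.1)) x.2.

Definition Eabs (p : nat) (x : Ept p) : C := p%:R ^- x.1.

Definition Edist (p : nat) (x z : Ept p) : C := zdist (Eemb x) (Eemb z).

(* The multiplicative Haar integral over E (d*z = dz/|z|, Z_p of dz-measure 1):
   limit of Riemann sums over the classes p^i (r + p^N Z_p), i < m,
   0 <= r < p^N, p not dividing r, each of d*z-measure p^{-N}, evaluated at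
   the representative p^i r. *)
Definition riemann_sum (p m : nat) (f : Ept p -> C) (N : nat) : C :=
  \sum_(i < m) \sum_(r < p ^ N | (r %% p != 0)%N)
     f (nat_of_ord i, zp_of_nat p r) * p%:R ^- N.

Definition Clim (u : nat -> C) : C :=
  (limn (fun n => complex.Re (u n)) +i* limn (fun n => complex.Im (u n)))%C.

Definition Eintegral (p m : nat) (f : Ept p -> C) : C :=
  Clim (riemann_sum m f).

Definition cp (p : nat) : C :=
  p%:R * (1 - p%:R^-1) ^+ 2 / (1 - p%:R ^- 2).

Definition Hker (p m : nat) (z x : Ept p) : C :=
  Eabs x * Eabs z / (Edist x z) ^+ 2
  + (p%:R ^+ m - 1)^-1 * (Eabs x / Eabs z + Eabs z / Eabs x).

Definition Dop (p m : nat) (phi : Ept p -> C) (x : Ept p) : C :=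
  - cp p * Eintegral m (fun z => Hker m z x * (phi z - phi x)).

Definition Echaracter (p m : nat) (pi : Ept p -> C) : Prop :=
  [/\ (forall x, in_E m x -> pi x != 0),
      (forall x y, in_E m x -> in_E m y -> pi (Emul m x y) = pi x * pi y) &
      (forall x, in_E m x -> forall eps : R, 0 < eps ->
         exists k, forall y, in_E m y -> y.1 = x.1 -> zcong k y.2 x.2 ->
           `|pi y - pi x| < (eps%:C)%C)].

Definition pihat (p : nat) (pi : Ept p -> C) (u : zp p) : C := pi (0%N, u).

Definition trivial_on (p : nat) (chi : zp p -> C) (k : nat) : Prop :=
  forall u, zunit u -> zcong k u (zp_of_nat p 1) -> chi u = 1.

Definition char_trivial (p : nat) (chi : zp p -> C) : Prop :=
  forall u, zunit u -> chi u = 1.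

Definition conductor (p : nat) (chi : zp p -> C) (n : nat) : Prop :=
  [/\ (1 <= n)%N, trivial_on chi n & forall k, (1 <= k < n)%N -> ~ trivial_on chi k].

End Padic.

(* Main.v *)
Require Import Defs.
From HB Require Import structures.
From mathcomp Require Import all_boot all_order all_algebra.
From mathcomp Require Import all_classical all_reals all_analysis.
From mathcomp Require Import complex.
From mathcomp Require Import zify ring lra.
From mathcomp Require realalg.
From mathcomp Require Import cyclic.
Set Implicit Arguments. Unset Strict Implicit. Unset Printing Implicit Defensive.
Import Order.TTheory GRing.Theory Num.Theory.
Local Open Scope ring_scope.

Section ZP.
Variable p : nat.
Hypothesis pgt1 : (1 < p)%N.

Lemma zp_ext (x y : zp p) : (forall k, zres x k = zres y k) -> x = y.
Proof.
case: x => fx mx cx; case: y => fy my cy /= H.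
have E : fx = fy by apply: funext.
subst fy. by rewrite (Prop_irrelevance mx my) (Prop_irrelevance cx cy).
Qed.

Lemma zres_le (x : zp p) k l : (l <= k)%N -> (zres x k %% p ^ l = zres x l)%N.
Proof.
elim: k => [|k IH] hl.
  by move: hl; rewrite leqn0 => /eqP ->; rewrite zres_mod.
case: (ltngtP l k.+1) hl => // [hlt|->] _; last by rewrite zres_mod.
rewrite -IH // -(zres_compat x k) modn_dvdm //.
by rewrite dvdn_exp2l // ltnW.
Qed.

Lemma zres0 (x : zp p) : zres x 0 = 0%N.
Proof. by rewrite -(zres_mod x 0) expn0 modn1. Qed.

Lemma zcong0 (x y : zp p) : zcong 0 x y.
Proof. by rewrite /zcong !zres0. Qed.

Lemma zcong_le k l (x y : zp p) : (l <= k)%N -> zcong k x y -> zcong l x y.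
Proof. by move=> hl /eqP H; rewrite /zcong -!(zres_le _ hl) H. Qed.

Lemma zcong_sym k (x y : zp p) : zcong k x y = zcong k y x.
Proof. by rewrite /zcong eq_sym. Qed.

Lemma zcong_trans k (x y z : zp p) : zcong k x y -> zcong k y z -> zcong k x z.
Proof. by rewrite /zcong => /eqP -> /eqP ->. Qed.

Lemma zres_nat r k : zres (zp_of_nat p r) k = (r %% p ^ k)%N.
Proof. by []. Qed.

Lemma zres_mul (x y : zp p) k : zres (zmul x y) k = (zres x k * zres y k %% p ^ k)%N.
Proof. by []. Qed.

Lemma zmul_nat r s : zmul (zp_of_nat p r) (zp_of_nat p s) = zp_of_nat p (r * s).
Proof. by apply: zp_ext => k; rewrite zres_mul !zres_nat modnMm. Qed.

Lemma zmul1 (v : zp p) : zmul (zp_of_nat p 1) v = v.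
Proof. by apply: zp_ext => k; rewrite zres_mul zres_nat modnMml mul1n zres_mod. Qed.

Lemma zunit_nat r : zunit (zp_of_nat p r) = (r %% p != 0)%N.
Proof. by rewrite /zunit zres_nat expn1. Qed.

Lemma zunit1 : zunit (zp_of_nat p 1).
Proof. by rewrite zunit_nat modn_small. Qed.

Lemma zunit_mul (x y : zp p) : zunit x -> zunit y -> prime p -> zunit (zmul x y).
Proof.
rewrite /zunit zres_mul expn1 => hx hy pp.
have hx' : ~~ (p %| zres x 1)%N by rewrite /dvdn -[X in (_ %% X)%N](expn1 p) zres_mod.
have hy' : ~~ (p %| zres y 1)%N by rewrite /dvdn -[X in (_ %% X)%N](expn1 p) zres_mod.
have := Euclid_dvdM (zres x 1) (zres y 1) pp; rewrite (negbTE hx') (negbTE hy') /dvdn => -> //.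
Qed.

Lemma zcong_nat k (u : zp p) r : zcong k u (zp_of_nat p r) = (zres u k == r %% p ^ k)%N.
Proof. by []. Qed.

Lemma zcong_mul k (x y x' y' : zp p) : zcong k x x' -> zcong k y y' ->
  zcong k (zmul x y) (zmul x' y').
Proof. by rewrite /zcong !zres_mul => /eqP -> /eqP ->. Qed.

Lemma zdist_char (R : realType) (x y : zp p) j :
  (forall l, (l <= j)%N -> zcong l x y) -> ~~ zcong j.+1 x y ->
  zdist R x y = (p%:R : R[i]) ^- j.
Proof.
move=> Hle Hn; rewrite /zdist.
case: pselect => [H|H]; last by exfalso; apply: H; exists j.+1.
rewrite /zval_diff; case: pselect => [H'|H'] //.
case: ex_minnP => k Hk Hmin.
have kj : k = j.+1.
  apply/eqP; rewrite eqn_leq Hmin //=.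
  rewrite ltnNge; apply/negP => hk; by rewrite Hle in Hk.
by rewrite kj.
Qed.

Lemma zdist_zero (R : realType) (x y : zp p) :
  (forall l, zcong l x y) -> zdist R x y = 0.
Proof.
move=> H; rewrite /zdist; case: pselect => // H'; exfalso.
by case: H' => k; rewrite H.
Qed.

Lemma zcong_cases (x y : zp p) :
  (forall l, zcong l x y) \/
  exists j, (forall l, (l <= j)%N -> zcong l x y) /\ ~~ zcong j.+1 x y.
Proof.
case: (pselect (exists k, ~~ zcong k x y)) => [H|H]; last first.
  left => l; apply/negPn/negP => hl; apply: H; by exists l.
right; case: (ex_minnP H) => k Hk Hmin.
destruct k as [|j]; first by rewrite zcong0 in Hk.
exists j; split => // l hl; apply/negPn/negP => /Hmin; rewrite leqNgt ltnS hl //.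
Qed.

End ZP.

Section EE.
Variable p : nat.
Hypothesis pgt1 : (1 < p)%N.
Let p0 : (0 < p)%N. Proof. exact: ltnW. Qed.

Lemma zres_Eemb (x : Ept p) k : zres (Eemb x) k = (p ^ x.1 * zres x.2 k %% p ^ k)%N.
Proof. by rewrite /Eemb zres_mul zres_nat modnMml. Qed.

Lemma zres_Eemb_low (x : Ept p) k : (k <= x.1)%N -> zres (Eemb x) k = 0%N.
Proof.
move=> hk; rewrite zres_Eemb; apply/eqP; rewrite -/(dvdn _ _).
by apply: dvdn_mulr; rewrite dvdn_exp2l.
Qed.

Lemma cong_shift a (u v : zp p) k :
  zcong (k + a) (Eemb (a, u)) (Eemb (a, v)) = zcong k u v.
Proof.
rewrite /zcong !zres_Eemb /= expnD (mulnC (p ^ k)%N) -!muln_modr ?expn_gt0 ?p0 //.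
by rewrite eqn_pmul2l ?expn_gt0 ?p0 // !zres_le ?leq_addr.
Qed.

Lemma zdist_same (R : realType) a (u v : zp p) :
  zdist R (Eemb (a, u)) (Eemb (a, v)) = (p%:R : R[i]) ^- a * zdist R u v.
Proof.
case: (zcong_cases u v) => [H|[j [H1 H2]]].
  rewrite !zdist_zero ?mulr0 // => l.
  case: (leqP l a) => hl.
    by rewrite /zcong !zres_Eemb_low.
  by rewrite -(subnK (ltnW hl)) cong_shift.
rewrite (@zdist_char p R u v j) // (@zdist_char p R _ _ (j + a)).
- by rewrite -invfM -exprD addnC.
- move=> l hl; case: (leqP l a) => hla.
    by rewrite /zcong !zres_Eemb_low.
  rewrite -(subnK (ltnW hla)) cong_shift; apply: H1.
  by rewrite leq_subLR addnC.
- by rewrite -addSn cong_shift.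
Qed.

Lemma ncong_diff a i (u v : zp p) : (a < i)%N -> zunit u ->
  ~~ zcong a.+1 (Eemb (a, u)) (Eemb (i, v)).
Proof.
move=> ai hu; rewrite /zcong (zres_Eemb_low (x := (i, v))) //.
rewrite zres_Eemb /= expnSr -muln_modr ?expn_gt0 ?p0 //.
rewrite muln_eq0 negb_or expn_eq0 (gtn_eqF p0) /=.
by rewrite -[X in (_ %% X)%N](expn1 p) zres_le.
Qed.

Lemma zdist_diff (R : realType) a i (u v : zp p) : a != i -> zunit u -> zunit v ->
  zdist R (Eemb (a, u)) (Eemb (i, v)) = (p%:R : R[i]) ^- (minn a i).
Proof.
move=> ai hu hv; apply: zdist_char.
  move=> l hl; rewrite /zcong !zres_Eemb_low //=.
    by apply: leq_trans hl (geq_minr _ _).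
  by apply: leq_trans hl (geq_minl _ _).
case: (ltngtP a i) ai => // hai _.
  by rewrite ncong_diff.
by rewrite zcong_sym ncong_diff.
Qed.

End EE.

Lemma modinv s d : (0 < d)%N -> coprime s d -> exists t, (s * t %% d = 1 %% d)%N.
Proof.
move=> d0 cs; exists (s ^ (totient d).-1)%N.
rewrite -expnS prednK ?totient_gt0 //.
exact: Euler_exp_totient.
Qed.

Set Default Proof Using "All".
Section Char.
Variable R : realType.
Local Notation C := R[i].
Variables (p m : nat) (pi : Ept p -> C).
Hypothesis pp : prime p.
Hypothesis m0 : (0 < m)%N.
Hypothesis hchar : Echaracter m pi.
Let pgt1 : (1 < p)%N. Proof. exact: prime_gt1. Qed.
Let p0 : (0 < p)%N. Proof. exact: prime_gt0. Qed.
Local Notation one := (zp_of_nat p 1).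
Local Notation chi := (pihat pi).

Lemma in_EE (i : nat) (v : zp p) : in_E m (i, v) = (i < m)%N && zunit v.
Proof. by []. Qed.

Lemma pi_nz (i : nat) (v : zp p) : (i < m)%N -> zunit v -> pi (i, v) != 0.
Proof. by case: hchar => H _ _ hi hv; apply: H; rewrite in_EE hi hv. Qed.

Lemma pi_mulE (x y : Ept p) : in_E m x -> in_E m y -> pi (Emul m x y) = pi x * pi y.
Proof. by case: hchar => _ H _; apply: H. Qed.

Lemma chi_mul (u v : zp p) : zunit u -> zunit v -> chi (zmul u v) = chi u * chi v.
Proof.
move=> hu hv; rewrite /pihat -pi_mulE ?in_EE ?m0 ?hu ?hv //.
by rewrite /Emul /= mod0n.
Qed.

Lemma chi_nz (u : zp p) : zunit u -> chi u != 0.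
Proof. by move=> hu; apply: pi_nz. Qed.

Lemma chi1 : chi one = 1.
Proof.
have h := chi_mul (zunit1 pgt1) (zunit1 pgt1).
rewrite zmul1 in h.
apply: (mulIf (chi_nz (zunit1 pgt1))); by rewrite mul1r -h.
Qed.

Lemma pi_split (i : nat) (v : zp p) : (i < m)%N -> zunit v -> pi (i, v) = pi (i, one) * chi v.
Proof.
move=> hi hv; rewrite /pihat -pi_mulE ?in_EE ?m0 ?hi ?hv ?zunit1 //.
by rewrite /Emul /= addn0 modn_small // zmul1.
Qed.

Definition wE := pi (1 %% m, one)%N.

Lemma pi_pow i : (i < m)%N -> pi (i, one) = wE ^+ i.
Proof.
elim: i => [|i IH] hi; first by rewrite expr0; exact: chi1.
have m2 : (1 < m)%N by apply: leq_ltn_trans hi.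
rewrite exprS -IH ?(ltnW hi) // /wE -pi_mulE ?in_EE ?ltn_pmod ?zunit1 ?(ltnW hi) //.
by rewrite /Emul /= zmul1 (modn_small m2) add1n modn_small.
Qed.

Lemma wE_m : wE ^+ m = 1.
Proof.
have hm : (m.-1 < m)%N by rewrite prednK.
rewrite -(prednK m0) exprS -pi_pow // /wE -pi_mulE ?in_EE ?ltn_pmod ?zunit1 //.
  2: by rewrite hm.
rewrite /Emul /= zmul1 modnDml add1n prednK // modnn; exact: chi1.
Qed.

Lemma trivial_on_mono k l : (k <= l)%N -> trivial_on chi k -> trivial_on chi l.
Proof. by move=> hkl H u hu hc; apply: H => //; apply: zcong_le hc. Qed.

Lemma LC n (v v' : zp p) : trivial_on chi n -> zunit v -> zunit v' -> zcong n v v' -> chi v = chi v'.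
Proof.
move=> Ht hv hv' hc.
case: n Ht hc => [|n] Ht hc.
  by rewrite !Ht // zcong0.
set s := zres v' n.+1.
have sp : (s %% p = zres v' 1)%N by rewrite -[X in (_ %% X)%N](expn1 p) zres_le.
have cs : coprime s (p ^ n.+1).
  rewrite coprime_pexpr // coprime_sym prime_coprime //.
  by rewrite /dvdn sp.
have pn0 : (0 < p ^ n.+1)%N by rewrite expn_gt0 p0.
have [t0 ht0] := modinv pn0 cs.
have pn1 : (1 < p ^ n.+1)%N by rewrite -{1}(expn0 p) ltn_exp2l.
have ht1 : (s * t0 %% p = 1)%N.
  have := congr1 (fun z => z %% p)%N ht0.
  have pd : (p %| p ^ n.+1)%N by rewrite dvdn_exp.
  rewrite !(modn_dvdm _ pd) => ->.
  by rewrite modn_small.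
set t := zp_of_nat p t0.
have ht : zunit t.
  rewrite zunit_nat; apply/eqP => h.
  by move: ht1; rewrite -modnMmr h muln0 mod0n.
have c1 : zcong n.+1 (zmul v' t) one.
  by rewrite /zcong zres_mul zres_nat modnMmr -/s ht0.
have c2 : zcong n.+1 (zmul v t) one.
  by move: c1; rewrite /zcong !zres_mul (eqP hc).
have e1 := Ht _ (zunit_mul hv' ht pp) c1.
have e2 := Ht _ (zunit_mul hv ht pp) c2.
rewrite !chi_mul // in e1 e2.
apply: (mulIf (chi_nz ht)); by rewrite e1 e2.
Qed.

End Char.

Lemma no_small (R : realType) (z : R[i]) :
  (forall j, `|z ^+ (2 ^ j) - 1| < ((2^-1 : R)%:C)%C) -> z = 1.
Proof.
move=> H.
pose d j := Normc.normc (z ^+ (2 ^ j) - 1).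
have Hd : forall j, d j < 2^-1 by move=> j; rewrite -ltcR; exact: H.
have d0 : forall j, 0 <= d j.
  move=> j; rewrite -lecR; have := normr_ge0 (z ^+ (2 ^ j) - 1); by rewrite rmorph0.
have step : forall j, (3 / 2) * d j <= d j.+1.
  move=> j; rewrite /d expnS mulnC exprM.
  set y := z ^+ (2 ^ j).
  have -> : y ^+ 2 - 1 = (y - 1) * (y + 1) by ring.
  rewrite Normc.normcM.
  have h2 : (2 : R) <= Normc.normc (y + 1) + Normc.normc (y - 1).
    have -> : (2 : R) = Normc.normc ((y + 1) + - (y - 1)).
      have -> : (y + 1) + - (y - 1) = 1 *+ 2 by rewrite mulr2n; ring.
      by rewrite normcMn Normc.normc1.
    by rewrite -(normcN (y - 1)); apply: le_normcD.
  have := Hd j; have := d0 j; rewrite /d -/y => h0 h1.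
  nra.
have step2 : forall k, 2 ^+ k * d 0 <= d (2 * k)%N.
  elim=> [|k IH]; first by rewrite expr0 mul1r muln0.
  have e1 := step (2 * k)%N; have e2 := step (2 * k).+1.
  have -> : (2 * k.+1 = (2 * k).+2)%N by rewrite mulnS.
  rewrite exprS; have := d0 (2 * k)%N; nra.
apply/eqP; rewrite -subr_eq0; apply/eqP.
apply: Normc.eq0_normc.
have : d 0 = Normc.normc (z - 1) by rewrite /d expn0 expr1.
move=> <-.
apply/eqP; rewrite eq_le d0 andbT; rewrite leNgt; apply/negP => hpos.
have hk := realalg.RealAlg.upper_nthrootVP hpos (leqnn _).
set k := Num.Def.archi_bound _ in hk.
have := step2 k; have := Hd (2 * k)%N.
have : 1 < 2 ^+ k * d 0.
  rewrite -(ltr_pdivrMl _ _ (exprn_gt0 k (ltr0n _ 2))); first by rewrite mulr1.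
move: hk; rewrite -exprVn => hk.
have hp : 0 < 2 ^+ k :> R by apply: exprn_gt0.
move=> h; nra.
Qed.

Set Default Proof Using "All".
Section Char2.
Variable R : realType.
Local Notation C := R[i].
Variables (p m : nat) (pi : Ept p -> C).
Hypothesis pp : prime p.
Hypothesis m0 : (0 < m)%N.
Hypothesis hchar : Echaracter m pi.
Let pgt1 : (1 < p)%N. Proof. exact: prime_gt1. Qed.
Local Notation one := (zp_of_nat p 1).
Local Notation chi := (pihat pi).

Lemma cont_triv : exists K, (1 <= K)%N /\ trivial_on chi K.
Proof.
have hc : forall x, in_E m x -> forall eps : R, 0 < eps ->
         exists k, forall y, in_E m y -> y.1 = x.1 -> zcong k y.2 x.2 ->
           `|pi y - pi x| < (eps%:C)%C by case: hchar.
have h2 : (0 : R) < 2^-1 by rewrite invr_gt0 ltr0Sn.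
have [k Hk] := hc (0%N, one) (introT andP (conj m0 (zunit1 pgt1))) (2^-1) h2.
exists k.+1; split => // u hu hcu.
apply: no_small => j.
have [y [hy hyc <-]] : exists y, [/\ zunit y, zcong k y one & chi y = chi u ^+ (2 ^ j)].
  elim: j => [|j [y [hy hyc hyE]]].
    by exists u; split => //; exact: zcong_le hcu.
  exists (zmul y y); split; first exact: zunit_mul.
    by rewrite -(zmul1 one); apply: zcong_mul.
  by rewrite (chi_mul pp m0 hchar) // hyE expnS mulnC exprM expr2.
rewrite -(chi1 pp m0 hchar); apply: Hk => //.
by rewrite (in_EE pp m0 hchar) m0 hy.
Qed.

Lemma conductor_exists : exists n, conductor chi n.
Proof.
have [K [K1 HK]] := cont_triv.
have ex : exists n, (1 <= n)%N && `[< trivial_on chi n >].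
  by exists K; rewrite K1; apply/asboolP.
case: (ex_minnP ex) => n /andP [n1 /asboolP hn] Hmin.
exists n; split => // k /andP [k1 kn] hk.
have := Hmin k; rewrite k1 /=.
by move/(_ (introT (asboolP _) hk)); rewrite leqNgt kn.
Qed.

End Char2.

Lemma count_mod d q c n : n = (d * q)%N -> (c < d)%N ->
  (\sum_(r < n | (r %% d == c)%N) 1)%N = q.
Proof.
move=> -> cd; rewrite -(big_mkord (fun r => r %% d == c)%N (fun _ => 1%N)).
elim: q => [|q IH]; first by rewrite muln0 big_geq.
rewrite mulnS addnC (big_cat_nat (leq0n (d * q)) (leq_addr d (d * q))) /= IH.
rewrite -{1}(add0n (d * q)%N) big_addn addKn.
rewrite /index_iota subn0 sum1_count.
rewrite (@eq_in_count _ _ (pred1 c)); last first.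
  move=> i; rewrite mem_iota add0n => /andP [_ hi] /=.
  by rewrite addnC mulnC modnMDl modn_small.
by rewrite count_uniq_mem ?iota_uniq // mem_iota cd addn1.
Qed.

Lemma sum1C (R : realType) n (P : pred nat) :
  \sum_(r < n | P r) (1 : R[i]) = ((\sum_(r < n | P r) 1)%N)%:R.
Proof. by rewrite natr_sum. Qed.

Lemma geom (F : fieldType) (q : F) n : q != 1 ->
  \sum_(i < n) q ^+ i = (q ^+ n - 1) / (q - 1).
Proof.
move=> q1; have q1' : q - 1 != 0 by rewrite subr_eq0.
elim: n => [|n IH]; first by rewrite big_ord0 expr0 subrr mul0r.
rewrite big_ord_recr /= IH exprS; field; exact: q1'.
Qed.

Set Default Proof Using "All".
Section Char3.
Variable R : realType.
Local Notation C := R[i].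
Variables (p m : nat) (pi : Ept p -> C).
Hypothesis pp : prime p.
Hypothesis m0 : (0 < m)%N.
Hypothesis hchar : Echaracter m pi.
Let pgt1 : (1 < p)%N. Proof. exact: prime_gt1. Qed.
Let p0 : (0 < p)%N. Proof. exact: prime_gt0. Qed.
Local Notation one := (zp_of_nat p 1).
Local Notation chi := (pihat pi).
Local Notation LC := (LC pp m0 hchar).
Local Notation chi_mul := (chi_mul pp m0 hchar).

Lemma orth N n (P : pred nat) s :
  trivial_on chi n -> (n <= N)%N -> (s %% p != 0)%N -> chi (zp_of_nat p s) != 1 ->
  (forall r, P ((r * s) %% p ^ N)%N = P r) -> (forall r, P r -> (r %% p != 0)%N) ->
  \sum_(r < p ^ N | P r) chi (zp_of_nat p r) = 0.
Proof.
move=> Ht nN sp cs1 HP HU.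
have pN0 : (0 < p ^ N)%N by rewrite expn_gt0 p0.
have cs : coprime s (p ^ N).
  by apply: coprimeXr; rewrite coprime_sym prime_coprime // /dvdn.
have [t ht] := modinv pN0 cs.
pose h (r : 'I_(p ^ N)) : 'I_(p ^ N) := Ordinal (ltn_pmod (r * s) pN0).
have key : forall r : 'I_(p ^ N), ((r * s %% p ^ N) * t %% p ^ N = r)%N.
  move=> r; rewrite modnMml -mulnA -modnMmr ht modnMmr muln1 modn_small //.
have hinj : injective h.
  move=> r1 r2 e; apply: val_inj; rewrite /= -(key r1) -(key r2).
  by have /= -> := congr1 val e.
have E : \sum_(r < p ^ N | P (h r)) chi (zp_of_nat p (h r))
       = \sum_(r < p ^ N | P r) chi (zp_of_nat p r) * chi (zp_of_nat p s).
  apply: eq_big => r; first by rewrite /= HP.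
  move=> Pr; rewrite /=.
  have ur : zunit (zp_of_nat p r).
    by rewrite zunit_nat; apply: HU; rewrite -HP.
  have us : zunit (zp_of_nat p s) by rewrite zunit_nat.
  rewrite -(chi_mul ur us) zmul_nat; apply: (LC Ht).
  - by rewrite zunit_nat; apply: HU.
  - by rewrite -zmul_nat zunit_mul.
  - apply: (zcong_le nN); by rewrite /zcong !zres_nat modn_mod.
have E2 : \sum_(r < p ^ N | P r) chi (zp_of_nat p r)
        = (\sum_(r < p ^ N | P r) chi (zp_of_nat p r)) * chi (zp_of_nat p s).
  by rewrite {1}(reindex_inj hinj) /= E -mulr_suml.
move: E2; set X := \sum_(_ < _ | _) _ => E2.
have : X * (1 - chi (zp_of_nat p s)) = 0 by rewrite mulrBr mulr1 -E2 subrr.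
move/eqP; rewrite mulf_eq0 subr_eq0 => /orP [/eqP //|].
by rewrite eq_sym (negbTE cs1).
Qed.
End Char3.

Set Default Proof Using "All".
Section Char4.
Variable R : realType.
Local Notation C := R[i].
Variables (p m : nat) (pi : Ept p -> C).
Hypothesis pp : prime p.
Hypothesis m0 : (0 < m)%N.
Hypothesis hchar : Echaracter m pi.
Let pgt1 : (1 < p)%N. Proof. exact: prime_gt1. Qed.
Let p0 : (0 < p)%N. Proof. exact: prime_gt0. Qed.
Local Notation one := (zp_of_nat p 1).
Local Notation chi := (pihat pi).
Local Notation LC := (LC pp m0 hchar).
Local Notation chi_mul := (chi_mul pp m0 hchar).
Local Notation orth := (orth pp m0 hchar).
Local Notation pC := (p%:R : C).

Lemma PW n N (u : zp p) r : trivial_on chi n -> (n <= N)%N -> zunit u ->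
  zunit (zp_of_nat p r) ->
  ((zdist R u (zp_of_nat p r)) ^+ 2)^-1 * (chi (zp_of_nat p r) - chi u)
  = (1 + \sum_(k < N.-1) ((pC ^+ 2) ^+ k.+1 - (pC ^+ 2) ^+ k)
          * (zcong k.+1 u (zp_of_nat p r))%:R) * (chi (zp_of_nat p r) - chi u).
Proof.
move=> Ht nN hu hr.
set r' := zp_of_nat p r.
have zero : zcong N u r' -> chi r' = chi u.
  move=> hc; apply: (LC Ht) => //; apply: (zcong_le nN); by rewrite zcong_sym.
case: (zcong_cases u r') => [Hall | [j [H1 H2]]].
  by rewrite zero // subrr !mulr0.
case: (leqP N j) => hNj.
  by rewrite zero ?subrr ?mulr0 //; apply: H1.
rewrite (@zdist_char p R u r' j) // -exprVn invrK -exprM mulnC exprM.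
congr (_ * _).
have ind : forall k : 'I_N.-1, (zcong k.+1 u r') = (k < j)%N.
  move=> k; case: (ltnP k j) => hk; first by apply: H1.
  apply/negP => hc; move/negP: H2; apply; by apply: zcong_le hc.
under eq_bigr => k _ do rewrite ind.
set q := pC ^+ 2.
have E : \sum_(k < N.-1) (q ^+ k.+1 - q ^+ k) * (k < j)%:R
       = \sum_(k < N.-1 | (k < j)%N) (q ^+ k.+1 - q ^+ k).
  rewrite [RHS]big_mkcond /=; apply: eq_bigr => k _.
  by case: (k < j)%N; rewrite ?mulr1 ?mulr0.
have hj : (j <= N.-1)%N by rewrite -ltnS prednK // (leq_ltn_trans (leq0n j) hNj).
rewrite E -(big_ord_widen _ (fun k => q ^+ k.+1 - q ^+ k) hj).
rewrite -(big_mkord xpredT (fun k => q ^+ k.+1 - q ^+ k)) telescope_sumr // expr0.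
by rewrite addrC subrK.
Qed.

Lemma inner_hi n l N (u : zp p) : trivial_on chi n -> (n <= l)%N -> zunit u ->
  \sum_(r < p ^ N | (r %% p != 0)%N)
     (zcong l u (zp_of_nat p r))%:R * (chi (zp_of_nat p r) - chi u) = 0.
Proof.
move=> Ht nl hu; apply: big1 => r hr.
case hc: (zcong l u (zp_of_nat p r)); last by rewrite mul0r.
have hr' : zunit (zp_of_nat p r) by rewrite zunit_nat.
have hc' : zcong n (zp_of_nat p r) u by rewrite zcong_sym; apply: zcong_le hc.
by rewrite (LC Ht hr' hu hc') subrr mulr0.
Qed.

Lemma cnt_mod l N c : (l <= N)%N -> (c < p ^ l)%N ->
  \sum_(r < p ^ N | (r %% p ^ l == c)%N) (1 : C) = (p ^ (N - l))%:R.
Proof.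
move=> lN cl; rewrite (sum1C R (p ^ N) (fun r => r %% p ^ l == c)%N); congr (_%:R).
by apply: count_mod => //; rewrite -expnD subnKC.
Qed.

Lemma cnt_units N : (1 <= N)%N ->
  \sum_(r < p ^ N | (r %% p != 0)%N) (1 : C) = (p ^ N - p ^ N.-1)%:R.
Proof.
move=> N1; rewrite (sum1C R (p ^ N) (fun r => r %% p != 0)%N); congr (_%:R).
have tot : (\sum_(r < p ^ N) 1 = p ^ N)%N by rewrite sum1_card card_ord.
have c0 : (\sum_(r < p ^ N | (r %% p == 0)%N) 1 = p ^ N.-1)%N.
  by apply: count_mod => //; rewrite -expnS prednK.
move: tot; rewrite (bigID (fun r : 'I_(p ^ N) => (r %% p == 0)%N)) /= c0.
by move=> e; have := f_equal (fun z => z - p ^ N.-1)%N e; rewrite addKn => <-.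
Qed.

Lemma witness l : ~ trivial_on chi l ->
  exists v, [/\ zunit v, zcong l v one & chi v != 1].
Proof.
move=> Hnt; case: (pselect (exists v, [/\ zunit v, zcong l v one & chi v != 1])) => // H.
exfalso; apply: Hnt => v hv hvc; apply/eqP; apply/negPn/negP => hne.
by apply: H; exists v; split.
Qed.

Lemma inner_lo n l N (u : zp p) : trivial_on chi n -> (n <= N)%N -> (1 <= l)%N ->
  (l <= N)%N -> ~ trivial_on chi l -> zunit u ->
  \sum_(r < p ^ N | (r %% p != 0)%N)
     (zcong l u (zp_of_nat p r))%:R * (chi (zp_of_nat p r) - chi u)
  = - (chi u * (p ^ (N - l))%:R).
Proof.
move=> Ht nN l1 lN Hnt hu.
have E : \sum_(r < p ^ N | (r %% p != 0)%N)
     (zcong l u (zp_of_nat p r))%:R * (chi (zp_of_nat p r) - chi u)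
   = \sum_(r < p ^ N | (r %% p ^ l == zres u l)%N) (chi (zp_of_nat p r) - chi u).
  rewrite big_mkcond [RHS]big_mkcond /=; apply: eq_bigr => r _.
  rewrite zcong_nat [(r %% p ^ l == _)%N]eq_sym.
  case hc: (zres u l == r %% p ^ l)%N; last by case: ifP => _ //; rewrite mul0r.
  have -> : (r %% p != 0)%N.
    rewrite -(modn_dvdm r (@dvdn_exp l p p l1 (dvdnn p))) -(eqP hc).
    by rewrite -[X in (_ %% X)%N](expn1 p) zres_le.
  by rewrite mul1r.
rewrite E sumrB.
have [v [hv hvc hv1]] := witness Hnt.
set s := zres v N.
have sp : (s %% p = zres v 1)%N.
  by rewrite /s -[X in (_ %% X)%N](expn1 p) zres_le // (leq_trans l1 lN).
have chis : chi (zp_of_nat p s) = chi v.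
  apply: (LC Ht); rewrite ?zunit_nat ?sp //.
  by rewrite /zcong zres_nat /s zres_le.
rewrite (orth (N := N) (n := n) (P := fun r => (r %% p ^ l == zres u l)%N) (s := s)) //; first last.
- move=> r /eqP hr; rewrite -(modn_dvdm r (@dvdn_exp l p p l1 (dvdnn p))) hr.
  by rewrite -[X in (_ %% X)%N](expn1 p) zres_le.
- move=> r; rewrite (modn_dvdm _ (dvdn_exp2l p lN)) -modnMmr.
  have -> : (s %% p ^ l = 1 %% p ^ l)%N by rewrite zres_le //; exact: (eqP hvc).
  by rewrite modnMmr muln1.
- by rewrite chis.
- by rewrite sp.
rewrite sub0r; congr (- _).
rewrite -[chi u]mulr1 -mulr_sumr mulr1 cnt_mod //.
by rewrite -(zres_mod u l) ltn_pmod // expn_gt0 p0.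
Qed.

Lemma units_orth n N : trivial_on chi n -> (n <= N)%N -> (1 <= N)%N ->
  ~ char_trivial chi ->
  \sum_(r < p ^ N | (r %% p != 0)%N) chi (zp_of_nat p r) = 0.
Proof.
move=> Ht nN N1 Hnt.
have [v [hv hv1]] : exists v, zunit v /\ chi v != 1.
  case: (pselect (exists v, zunit v /\ chi v != 1)) => // H.
  exfalso; apply: Hnt => v hv; apply/eqP; apply/negPn/negP => hne.
  by apply: H; exists v.
set s := zres v N.
have sp : (s %% p = zres v 1)%N.
  by rewrite /s -[X in (_ %% X)%N](expn1 p) zres_le.
have chis : chi (zp_of_nat p s) = chi v.
  apply: (LC Ht); rewrite ?zunit_nat ?sp //.
  by rewrite /zcong zres_nat /s zres_le.
apply: (orth (N := N) (n := n) (P := fun r => (r %% p != 0)%N) (s := s)) => //.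
- by rewrite sp.
- by rewrite chis.
- move=> r; rewrite (modn_dvdm _ (@dvdn_exp N p p N1 (dvdnn p))).
  have ps : ~~ (p %| s)%N by rewrite /dvdn sp.
  rewrite -!/(dvdn p _) Euclid_dvdM // (negbTE ps) orbF.
  done.
Qed.
End Char4.

Set Default Proof Using "All".
Section Char5.
Variable R : realType.
Local Notation C := R[i].
Variables (p m : nat) (pi : Ept p -> C).
Hypothesis pp : prime p.
Hypothesis m0 : (0 < m)%N.
Hypothesis hchar : Echaracter m pi.
Let pgt1 : (1 < p)%N. Proof. exact: prime_gt1. Qed.
Let p0 : (0 < p)%N. Proof. exact: prime_gt0. Qed.
Local Notation one := (zp_of_nat p 1).
Local Notation chi := (pihat pi).
Local Notation pC := (p%:R : C).
Let pC0 : pC != 0. Proof. by rewrite pnatr_eq0 -lt0n p0. Qed.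

Definition hval (a i : nat) : C :=
  pC ^- a * pC ^- i / (pC ^- (minn a i)) ^+ 2
  + (pC ^+ m - 1)^-1 * (pC ^- a / pC ^- i + pC ^- i / pC ^- a).

Lemma Hker_diff (a i : nat) (u v : zp p) : a != i -> zunit u -> zunit v ->
  Hker R m (i, v) (a, u) = hval a i.
Proof.
move=> ai hu hv; rewrite /Hker /Edist /Eabs /= (zdist_diff pgt1) //.
Qed.

Lemma Hker_same (a : nat) (u v : zp p) :
  Hker R m (a, v) (a, u) = ((zdist R u v) ^+ 2)^-1 + 2 * (pC ^+ m - 1)^-1.
Proof.
rewrite /Hker /Edist /Eabs /= (zdist_same pgt1).
have hx : pC ^- a != 0 by rewrite invr_eq0 expf_neq0.
rewrite exprMn invfM -expr2 mulrA mulfV ?expf_neq0 // mul1r divff //.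
congr (_ + _); by rewrite mulrC mulr2n.
Qed.


Local Notation U := (fun r : nat => (r %% p != 0)%N).
Local Notation f a u := (fun z => Hker R m z (a, u) * (pi z - pi (a, u))).

Lemma part_diff N (a : nat) (u : zp p) (g : nat -> C) : zunit u ->
  (forall i : nat, (i < m)%N -> i != a ->
     \sum_(r < p ^ N | U r) (pi (i, zp_of_nat p r) - pi (a, u)) = g i) ->
  \sum_(i < m | val i != a)
     \sum_(r < p ^ N | U r) f a u (nat_of_ord i, zp_of_nat p r) * pC ^- N
  = \sum_(i < m | val i != a) hval a i * (g i * pC ^- N).
Proof.
move=> hu H; apply: eq_bigr => i hi.
rewrite -(H i (ltn_ord i) hi).
under eq_bigr => r hr do rewrite (Hker_diff (v := zp_of_nat p r)) ?zunit_nat // 1?eq_sym //.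
by rewrite -mulr_suml -mulr_sumr mulrA.
Qed.

Lemma phi_ratio N : (1 <= N)%N -> (p ^ N - p ^ N.-1)%:R * pC ^- N = 1 - pC^-1.
Proof.
move=> N1; rewrite natrB; last by rewrite leq_pexp2l // leq_pred.
rewrite !natrX -(prednK N1) /= exprS.
have hX : pC ^+ N.-1 != 0 by rewrite expf_neq0.
by field; rewrite pC0 hX.
Qed.

Local Notation wk k := ((pC ^+ 2) ^+ k.+1 - (pC ^+ 2) ^+ k).

Lemma ratio l N : (l <= N)%N -> (p ^ (N - l))%:R * pC ^- N = pC ^- l.
Proof.
move=> lN; rewrite natrX -{2}(subnK lN) exprD invfM mulrA mulfV ?mul1r //.
by rewrite expf_neq0.
Qed.

Lemma Tsum n N y : (1 <= n)%N -> (n <= N)%N ->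
  pC ^- N * \sum_(k < N.-1) wk k * (if (k.+1 < n)%N then - (y * (p ^ (N - k.+1))%:R) else 0)
  = - y * \sum_(k < n.-1) wk k * pC ^- k.+1.
Proof.
move=> n1 nN; rewrite mulr_sumr.
have hn : (n.-1 <= N.-1)%N by rewrite -!subn1 leq_sub2r.
rewrite (big_ord_widen _ (fun k => wk k * pC ^- k.+1) hn) mulr_sumr [RHS]big_mkcond /=.
apply: eq_bigr => k _.
have -> : (k.+1 < n)%N = (k < n.-1)%N by rewrite -{1}(prednK n1) ltnS.
case: ifP => hk; last by rewrite !mulr0.
have kN : (k.+1 <= N)%N.
  apply: leq_trans nN; rewrite -(prednK n1) ltnS; exact: ltnW.
rewrite -(ratio kN); ring.
Qed.

Lemma part_same_i n N (a : nat) (u : zp p) : conductor chi n -> ~ char_trivial chi ->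
  (n <= N)%N -> (a < m)%N -> zunit u ->
  \sum_(r < p ^ N | U r) f a u (a, zp_of_nat p r) * pC ^- N
  = - pi (a, u) * ((1 + 2 * (pC ^+ m - 1)^-1) * (1 - pC^-1)
       + \sum_(k < n.-1) wk k * pC ^- k.+1).
Proof.
case => n1 Ht Hmin Hnt nN ha hu.
have N1 : (1 <= N)%N by apply: leq_trans nN.
set K2 := 2 * (pC ^+ m - 1)^-1.
set ca := pi (a, one).
have step : forall r : 'I_(p ^ N), U r -> f a u (a, zp_of_nat p r) * pC ^- N
   = ca * pC ^- N * ((1 + K2) * (chi (zp_of_nat p r) - chi u)
       + \sum_(k < N.-1) wk k * ((zcong k.+1 u (zp_of_nat p r))%:R
             * (chi (zp_of_nat p r) - chi u))).
  move=> r hr; have hr' : zunit (zp_of_nat p r) by rewrite zunit_nat.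
  rewrite /= Hker_same (pi_split pp m0 hchar ha hr') (pi_split pp m0 hchar ha hu) -/ca.
  have e := PW pp m0 hchar Ht nN hu hr'.
  have -> : \sum_(k < N.-1) wk k * ((zcong k.+1 u (zp_of_nat p r))%:R
             * (chi (zp_of_nat p r) - chi u))
     = (\sum_(k < N.-1) wk k * (zcong k.+1 u (zp_of_nat p r))%:R)
          * (chi (zp_of_nat p r) - chi u).
    by rewrite mulr_suml; apply: eq_bigr => k _; rewrite mulrA.
  set D := ((zdist R u (zp_of_nat p r)) ^+ 2)^-1 in e *.
  set X := chi (zp_of_nat p r) - chi u in e *.
  have -> : (D + K2) * (ca * chi (zp_of_nat p r) - ca * chi u) * pC ^- N
          = ca * pC ^- N * (D * X + K2 * X) by rewrite /X; ring.
  rewrite e; ring.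
rewrite (eq_bigr _ step) -mulr_sumr big_split /= -mulr_sumr.
rewrite sumrB (units_orth pp m0 hchar Ht nN N1 Hnt) sub0r.
rewrite -[chi u]mulr1 -mulr_sumr mulr1 (cnt_units pp m0 hchar N1).
rewrite exchange_big /=.
under eq_bigr => k _ do rewrite -mulr_sumr.
have E : forall k : 'I_N.-1,
   wk k * \sum_(i < p ^ N | U i) (zcong k.+1 u (zp_of_nat p i))%:R * (chi (zp_of_nat p i) - chi u)
   = wk k * (if (k.+1 < n)%N then - (chi u * (p ^ (N - k.+1))%:R) else 0).
  move=> k; congr (_ * _); case: ifP => hk.
    apply: (inner_lo pp m0 hchar Ht nN) => //.
      by apply: leq_trans (ltn_ord k) _; rewrite leq_pred.
    by apply: Hmin; rewrite hk.
  have nl : (n <= k.+1)%N by rewrite leqNgt hk.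
  exact: (inner_hi pp m0 hchar N Ht nl hu).
rewrite (eq_bigr _ (fun k _ => E k)).
rewrite (pi_split pp m0 hchar ha hu) -/ca.
set B := \sum_(k < N.-1) _.
have -> : ca * pC ^- N * ((1 + K2) * - (chi u * (p ^ N - p ^ N.-1)%:R) + B)
   = ca * (- (1 + K2) * chi u * ((p ^ N - p ^ N.-1)%:R * pC ^- N) + pC ^- N * B) by ring.
rewrite (phi_ratio N1) /B (Tsum _ n1 nN); ring.
Qed.

Lemma part_same_ii N (a : nat) (u : zp p) : char_trivial chi -> (a < m)%N -> zunit u ->
  \sum_(r < p ^ N | U r) f a u (a, zp_of_nat p r) * pC ^- N = 0.
Proof.
move=> Ht ha hu; apply: big1 => r hr; have hr' : zunit (zp_of_nat p r) by rewrite zunit_nat.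
rewrite /= (pi_split pp m0 hchar ha hr') (pi_split pp m0 hchar ha hu) !Ht //.
by rewrite subrr !mulr0 mul0r.
Qed.
End Char5.

Unset Default Proof Using.
Section Alg.
Variable R : realType.
Local Notation C := R[i].
Variables (p m : nat).
Hypothesis pgt1 : (1 < p)%N.
Local Notation pC := (p%:R : C).
Let pC0 : pC != 0. Proof. by rewrite pnatr_eq0 -lt0n ltnW. Qed.
Let pC1 : pC - 1 != 0.
Proof.
rewrite subr_eq0; apply/negP => /eqP h.
have : (p == 1)%N by rewrite -(eqr_nat C) h.
by rewrite (gtn_eqF pgt1).
Qed.
Hypothesis m0 : (0 < m)%N.
Let pM1 : pC ^+ m - 1 != 0.
Proof.
rewrite -natrX subr_eq0; apply/negP => /eqP h.
have : (p ^ m == 1)%N by rewrite -(eqr_nat C) h.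
by rewrite gtn_eqF // -{1}(expn0 p) ltn_exp2l.
Qed.
Local Notation wk k := ((pC ^+ 2) ^+ k.+1 - (pC ^+ 2) ^+ k).

Lemma Tclosed n' : \sum_(k < n') wk k * pC ^- k.+1
   = (1 - pC ^- 2) * (pC ^+ n'.+1 - pC) / (pC - 1).
Proof.
elim: n' => [|n IH]; first by rewrite big_ord0 expr1 subrr mulr0 mul0r.
rewrite big_ord_recr /= IH.
have hX : pC ^+ n != 0 by rewrite expf_neq0.
rewrite !(exprAC pC 2) !exprS.
field. by rewrite pC1 hX pC0.
Qed.


Lemma sum_ne (F : nat -> C) a (ha : (a < m)%N) :
  \sum_(i < m | val i != a) F i = \sum_(i < m) F i - F a.
Proof.
rewrite [\sum_(i < m) F i](bigD1 (Ordinal ha)) //= addrC addrK.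
by apply: eq_bigl => i.
Qed.

Lemma hval_pt w a i : a != i ->
  hval R p m a i * w ^+ i =
    (if (i < a)%N then (pC ^+ a)^-1 * (pC * w) ^+ i else 0)
  + (if (a < i)%N then pC ^+ a * (w / pC) ^+ i else 0)
  + (pC ^+ m - 1)^-1 * ((pC ^+ a)^-1 * (pC * w) ^+ i + pC ^+ a * (w / pC) ^+ i).
Proof.
move=> ai; rewrite /hval !exprMn exprVn.
have hP : pC ^+ a != 0 by rewrite expf_neq0.
have hX : pC ^+ i != 0 by rewrite expf_neq0.
case: (ltngtP i a) ai => // h _.
  by rewrite exprVn; field; rewrite hP hX pM1.
by rewrite exprVn; field; rewrite hP hX pM1.
Qed.

Lemma Lsum w a : (a < m)%N -> w ^+ m = 1 -> pC * w != 1 -> w / pC != 1 ->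
  \sum_(i < m | val i != a) hval R p m a i * w ^+ i =
   (pC ^+ a)^-1 * (((pC * w) ^+ a - 1) / (pC * w - 1))
 + pC ^+ a * (((pC ^+ m)^-1 - 1) / (w / pC - 1))
 - pC ^+ a * (((w / pC) ^+ a.+1 - 1) / (w / pC - 1))
 + (pC ^+ m - 1)^-1 * ((pC ^+ a)^-1 * ((pC ^+ m - 1) / (pC * w - 1))
      + pC ^+ a * (((pC ^+ m)^-1 - 1) / (w / pC - 1)) - 2 * w ^+ a).
Proof.
move=> ha wm h1 h2.
rewrite (eq_bigr (fun i : 'I_m =>
    (if (i < a)%N then (pC ^+ a)^-1 * (pC * w) ^+ i else 0)
  + (if (a < i)%N then pC ^+ a * (w / pC) ^+ i else 0)
  + (pC ^+ m - 1)^-1 * ((pC ^+ a)^-1 * (pC * w) ^+ i + pC ^+ a * (w / pC) ^+ i)));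
  last by move=> i hi; rewrite hval_pt // eq_sym.
rewrite (sum_ne (fun i => (if (i < a)%N then (pC ^+ a)^-1 * (pC * w) ^+ i else 0)
  + (if (a < i)%N then pC ^+ a * (w / pC) ^+ i else 0)
  + (pC ^+ m - 1)^-1 * ((pC ^+ a)^-1 * (pC * w) ^+ i + pC ^+ a * (w / pC) ^+ i))) //.
rewrite !big_split /= ltnn addr0 add0r -!mulr_sumr big_split /= -!mulr_sumr.
have E1 : \sum_(i < m) (if (i < a)%N then (pC ^+ a)^-1 * (pC * w) ^+ i else 0)
        = (pC ^+ a)^-1 * \sum_(i < a) (pC * w) ^+ i.
  rewrite -big_mkcond /= (big_ord_widen _ _ (ltnW ha)) mulr_sumr.
  by [].
have E2 : \sum_(i < m) (if (a < i)%N then pC ^+ a * (w / pC) ^+ i else 0)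
        = pC ^+ a * (\sum_(i < m) (w / pC) ^+ i - \sum_(i < a.+1) (w / pC) ^+ i).
  rewrite -big_mkcond /= (big_ord_widen _ _ ha).
  rewrite [\sum_(i < m) (w / pC) ^+ i](bigID (fun i : 'I_m => (i < a.+1)%N)) /= addrC addrK.
  rewrite mulr_sumr; apply: eq_bigl => i; by rewrite ltnNge.
rewrite E1 E2 !geom //.
have -> : (pC * w) ^+ m = pC ^+ m by rewrite exprMn wm mulr1.
have -> : (w / pC) ^+ m = (pC ^+ m)^-1 by rewrite exprMn wm mul1r exprVn.
have d1 : pC * w - 1 != 0 by rewrite subr_eq0.
have d2 : w / pC - 1 != 0 by rewrite subr_eq0.
have hP : pC ^+ a != 0 by rewrite expf_neq0.
move: d1 d2; rewrite !exprMn !exprVn => d1 d2.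
have d3 : w + -1 * pC != 0.
  rewrite mulN1r; apply/eqP => h; move/eqP: d2; apply.
  by rewrite (subr0_eq h) divff // subrr.
field; by rewrite pC0 d1 d3 hP pM1 !expf_neq0.
Qed.
End Alg.

Module CL.
Import numFieldNormedType.Exports.
Local Open Scope classical_set_scope.
Lemma Clim_ev (R : realType) (u : nat -> R[i]) S N0 :
  (forall N, (N0 <= N)%N -> u N = S) -> Clim u = S.
Proof.
move=> H; rewrite /Clim.
have hre : (fun n => complex.Re (u n)) @ \oo --> complex.Re S.
  apply: cvg_near_cst; exists N0 => // N hN /=; by rewrite H.
have him : (fun n => complex.Im (u n)) @ \oo --> complex.Im S.
  apply: cvg_near_cst; exists N0 => // N hN /=; by rewrite H.
rewrite (cvg_lim _ hre) // (cvg_lim _ him) //.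
by case: S {H hre him}.
Qed.

End CL.
Import CL.
Set Default Proof Using "All".
Section Final.
Variable R : realType.
Local Notation C := R[i].
Variables (p m : nat) (pi : Ept p -> C).
Hypothesis pp : prime p.
Hypothesis m0 : (0 < m)%N.
Hypothesis hchar : Echaracter m pi.
Let pgt1 : (1 < p)%N. Proof. exact: prime_gt1. Qed.
Let p0 : (0 < p)%N. Proof. exact: prime_gt0. Qed.
Local Notation one := (zp_of_nat p 1).
Local Notation chi := (pihat pi).
Local Notation pC := (p%:R : C).
Local Notation U := (fun r : nat => (r %% p != 0)%N).
Local Notation f a u := (fun z => Hker R m z (a, u) * (pi z - pi (a, u))).

Lemma RS_split N (a : nat) (u : zp p) : (a < m)%N ->
  riemann_sum m (f a u) N =
  \sum_(r < p ^ N | U r) f a u (a, zp_of_nat p r) * pC ^- N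
  + \sum_(i < m | val i != a)
     \sum_(r < p ^ N | U r) f a u (nat_of_ord i, zp_of_nat p r) * pC ^- N.
Proof.
move=> ha; rewrite /riemann_sum (bigD1 (Ordinal ha)) //=.
Qed.


Local Notation wk k := ((pC ^+ 2) ^+ k.+1 - (pC ^+ 2) ^+ k).

Lemma RS_i n N (a : nat) (u : zp p) : conductor chi n -> ~ char_trivial chi ->
  (n <= N)%N -> (a < m)%N -> zunit u ->
  riemann_sum m (f a u) N =
   - pi (a, u) * ((1 + 2 * (pC ^+ m - 1)^-1) * (1 - pC^-1)
       + \sum_(k < n.-1) wk k * pC ^- k.+1)
   - pi (a, u) * (1 - pC^-1) * \sum_(i < m | val i != a) hval R p m a i.
Proof.
move=> hc Hnt nN ha hu.
have [n1 Ht _] := hc.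
have N1 : (1 <= N)%N by apply: leq_trans nN.
rewrite RS_split // (part_same_i pp m0 hchar hc Hnt nN ha hu).
congr (_ + _).
rewrite (part_diff pp m0 hchar (g := fun _ => - (pi (a, u) * (p ^ N - p ^ N.-1)%:R))) //.
  rewrite mulr_sumr -sumrN; apply: eq_bigr => i _.
  rewrite -(phi_ratio pp m0 hchar N1); ring.
move=> i hi _.
rewrite sumrB.
under eq_bigr => r hr do rewrite (pi_split pp m0 hchar hi (v := zp_of_nat p r)) ?zunit_nat //.
rewrite -mulr_sumr (units_orth pp m0 hchar Ht nN N1 Hnt) mulr0 sub0r.
by rewrite -[pi (a, u)]mulr1 -mulr_sumr mulr1 (cnt_units pp m0 hchar N1).
Qed.

Local Notation w := (wE m pi).

Lemma RS_ii N (a : nat) (u : zp p) : char_trivial chi ->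
  (1 <= N)%N -> (a < m)%N -> zunit u ->
  riemann_sum m (f a u) N =
   (1 - pC^-1) * \sum_(i < m | val i != a) hval R p m a i * (w ^+ i - w ^+ a).
Proof.
move=> Ht N1 ha hu.
rewrite RS_split // (part_same_ii pp m0 hchar _ Ht ha hu) add0r.
rewrite (part_diff pp m0 hchar (g := fun i => (p ^ N - p ^ N.-1)%:R * (w ^+ i - w ^+ a))) //.
  rewrite mulr_sumr; apply: eq_bigr => i _.
  rewrite -(phi_ratio pp m0 hchar N1); ring.
move=> i hi _.
have -> : pi (a, u) = w ^+ a by rewrite (pi_split pp m0 hchar ha hu) Ht // mulr1 (pi_pow pp m0 hchar ha).
under eq_bigr => r hr do rewrite (pi_split pp m0 hchar hi (v := zp_of_nat p r)) ?zunit_nat // Ht ?zunit_nat // mulr1 (pi_pow pp m0 hchar hi).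
by rewrite -[_ - _]mulr1 -mulr_sumr mulr1 (cnt_units pp m0 hchar N1) mulrC.
Qed.

Lemma Dop_ev (a : nat) (u : zp p) S N0 :
  (forall N, (N0 <= N)%N -> riemann_sum m (f a u) N = S) ->
  Dop m pi (a, u) = - cp R p * S.
Proof. by move=> H; rewrite /Dop /Eintegral (Clim_ev H). Qed.
End Final.

Set Default Proof Using "All".
Section Final2.
Variable R : realType.
Local Notation C := R[i].
Variables (p m : nat) (pi : Ept p -> C).
Hypothesis pp : prime p.
Hypothesis m0 : (0 < m)%N.
Hypothesis hchar : Echaracter m pi.
Let pgt1 : (1 < p)%N. Proof. exact: prime_gt1. Qed.
Let p0 : (0 < p)%N. Proof. exact: prime_gt0. Qed.
Local Notation chi := (pihat pi).
Local Notation pC := (p%:R : C).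
Let pC0 : pC != 0. Proof. by rewrite pnatr_eq0 -lt0n p0. Qed.
Let pC1 : pC - 1 != 0.
Proof.
rewrite subr_eq0; apply/negP => /eqP h.
have : (p == 1)%N by rewrite -(eqr_nat C) h.
by rewrite (gtn_eqF pgt1).
Qed.
Let pCp1 : pC + 1 != 0.
Proof. by rewrite -(natrD C p 1) pnatr_eq0 addn1. Qed.
Let pM1 : pC ^+ m - 1 != 0.
Proof.
rewrite -natrX subr_eq0; apply/negP => /eqP h.
have : (p ^ m == 1)%N by rewrite -(eqr_nat C) h.
by rewrite gtn_eqF // -{1}(expn0 p) ltn_exp2l.
Qed.

Lemma main_i n x : ~ char_trivial chi -> conductor chi n -> in_E m x ->
  Dop m pi x = ((p - 1) * p ^ n.-1)%:R * pi x.
Proof.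
move=> Hnt hc; case: x => a u /andP [ha hu].
rewrite (Dop_ev pp m0 hchar (N0 := n) (S := - pi (a, u) * ((1 + 2 * (pC ^+ m - 1)^-1) * (1 - pC^-1)
       + \sum_(k < n.-1) ((pC ^+ 2) ^+ k.+1 - (pC ^+ 2) ^+ k) * pC ^- k.+1)
   - pi (a, u) * (1 - pC^-1) * \sum_(i < m | val i != a) hval R p m a i)); last first.
  by move=> N nN; apply: (RS_i pp m0 hchar hc Hnt nN ha hu).
have e : \sum_(i < m | val i != a) hval R p m a i
       = \sum_(i < m | val i != a) hval R p m a i * 1 ^+ i.
  by apply: eq_bigr => i _; rewrite expr1n mulr1.
rewrite e Lsum //; last first.
- by rewrite div1r invr_eq1 pnatr_eq1 (gtn_eqF pgt1).
- by rewrite mulr1 pnatr_eq1 (gtn_eqF pgt1).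
- by rewrite expr1n.
rewrite (Tclosed R pgt1).
case: hc => n1 _ _; case: n n1 => // n' _ /=.
rewrite natrM natrB ?(ltnW pgt1) // natrX.
rewrite !mulr1 !expr1n div1r !exprVn !exprS /cp.
have hA : pC ^+ a != 0 by rewrite expf_neq0.
have hM : pC ^+ m != 0 by rewrite expf_neq0.
have h1 : 1 + -1 * pC != 0 by rewrite mulN1r subr_eq0 eq_sym -subr_eq0.
have h2 : pC ^+ 2 - 1 != 0.
  have -> : pC ^+ 2 - 1 = (pC - 1) * (pC + 1) by ring.
  by rewrite mulf_neq0.
field; by rewrite pC0 h1 hM pC1 hA pM1 h2.
Qed.


Local Notation w := (wE m pi).

Lemma main_ii x : char_trivial chi -> in_E m x ->
  Dop m pi x =
     (pC * (pC - 1) * (2 - w - Num.conj w))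
       / (pC ^+ 2 - pC * (w + Num.conj w) + 1) * pi x.
Proof.
move=> Ht; case: x => a u /andP [ha hu].
have pix : pi (a, u) = w ^+ a by rewrite (pi_split pp m0 hchar ha hu) Ht // mulr1 (pi_pow pp m0 hchar ha).
rewrite (Dop_ev pp m0 hchar (N0 := 1) (S := (1 - pC^-1) * \sum_(i < m | val i != a) hval R p m a i * (w ^+ i - w ^+ a))); last first.
  by move=> N N1; apply: (RS_ii pp m0 hchar Ht N1 ha hu).
have wm : w ^+ m = 1 by apply: (wE_m pp m0 hchar).
have w0 : w != 0 by apply/eqP => h; move: wm; rewrite h expr0n gtn_eqF //; move/eqP; rewrite eq_sym oner_eq0.
have nw : `|w| = 1.
  apply/eqP; rewrite -(pexpr_eq1 m0) ?normr_ge0 // -normrX wm normr1 //.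
have cw : Num.conj w = w^-1.
  have : w * Num.conj w = 1 by rewrite -normCK nw expr1n.
  by move=> h; rewrite -[Num.conj w](mulKf w0) h mulr1.
have npC : `|pC| = pC by rewrite normr_nat.
have hpw : pC * w != 1.
  apply/eqP => h; have := congr1 Num.norm h; rewrite normrM npC nw mulr1 normr1.
  by move/eqP; rewrite pnatr_eq1 (gtn_eqF pgt1).
have hwp : w / pC != 1.
  apply/eqP => h0; have h : w = pC by rewrite -(divfK pC0 w) h0 mul1r.
  by move: nw; rewrite h npC => /eqP; rewrite pnatr_eq1 (gtn_eqF pgt1).
have e : \sum_(i < m | val i != a) hval R p m a i * (w ^+ i - w ^+ a)
   = \sum_(i < m | val i != a) hval R p m a i * w ^+ i
     - w ^+ a * \sum_(i < m | val i != a) hval R p m a i * 1 ^+ i.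
  rewrite mulr_sumr -sumrB; apply: eq_bigr => i _; rewrite expr1n; ring.
rewrite e Lsum // Lsum //; last first.
- by rewrite div1r invr_eq1 pnatr_eq1 (gtn_eqF pgt1).
- by rewrite mulr1 pnatr_eq1 (gtn_eqF pgt1).
- by rewrite expr1n.
rewrite cw pix !mulr1 !expr1n div1r !exprMn !exprVn !exprS /cp.
have hA : pC ^+ a != 0 by rewrite expf_neq0.
have hW : w ^+ a != 0 by rewrite expf_neq0.
have hM : pC ^+ m != 0 by rewrite expf_neq0.
have h1 : 1 + -1 * pC != 0 by rewrite mulN1r subr_eq0 eq_sym -subr_eq0.
have h2 : pC ^+ 2 - 1 != 0.
  have -> : pC ^+ 2 - 1 = (pC - 1) * (pC + 1) by ring.
  by rewrite mulf_neq0.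
have hwp' : w != pC by apply: contra hwp => /eqP ->; rewrite divff.
have d1 : pC * w - 1 != 0 by rewrite subr_eq0.
have d2 : w + -1 * pC != 0 by rewrite mulN1r subr_eq0.
have d3 : pC * pC * w - pC * (w * w + 1) + w != 0.
  have -> : pC * pC * w - pC * (w * w + 1) + w = (pC * w - 1) * (pC - w) by ring.
  by rewrite mulf_neq0 // subr_eq0 eq_sym.
field; by rewrite w0 d3 pC0 h1 hM pC1 hA pM1 d2 d1 h2.
Qed.
End Final2.


Theorem mainTheorem2 (R : realType) (p m : nat) (pi : Ept p -> R[i]) :
  prime p -> (0 < m)%N -> Echaracter m pi ->
  [/\ (exists lam : R[i], forall x, in_E m x -> Dop m pi x = lam * pi x),
      (forall n : nat, ~ char_trivial (pihat pi) -> conductor (pihat pi) n ->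
         forall x, in_E m x -> Dop m pi x = ((p - 1) * p ^ n.-1)%:R * pi x) &
      (char_trivial (pihat pi) ->
         let w := pi (1 %% m, zp_of_nat p 1)%N in
         forall x, in_E m x ->
           Dop m pi x =
             (p%:R * (p%:R - 1) * (2 - w - Num.conj w))
               / (p%:R ^+ 2 - p%:R * (w + Num.conj w) + 1) * pi x)].
Proof.
move=> pp m0 hchar.
have Hi : forall n : nat, ~ char_trivial (pihat pi) -> conductor (pihat pi) n ->
         forall x, in_E m x -> Dop m pi x = ((p - 1) * p ^ n.-1)%:R * pi x.
  by move=> n Hnt hc x hx; apply: (main_i pp m0 hchar Hnt hc hx).
have Hii : char_trivial (pihat pi) ->
         let w := pi (1 %% m, zp_of_nat p 1)%N in
         forall x, in_E m x ->
           Dop m pi x =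
             (p%:R * (p%:R - 1) * (2 - w - Num.conj w))
               / (p%:R ^+ 2 - p%:R * (w + Num.conj w) + 1) * pi x.
  by move=> Ht w x hx; apply: (main_ii pp m0 hchar Ht hx).
split => //.
case: (pselect (char_trivial (pihat pi))) => Ht.
  by eexists => x hx; apply: (Hii Ht).
have [n hc] := conductor_exists pp m0 hchar.
by eexists => x hx; apply: (Hi n Ht hc).
Qed.
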